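(* Let $L$ be a finite lattice. Then $\mathsf{C}(L)=\mathsf{Pol}_{0,1}(L)$ if and only if, for each join-irreducible element $a\in L$, the function $\chi_a$ is a (unary) polynomial of $L$.
   Context: $L$ is a finite lattice with least element $0$ and greatest element $1$. An $n$-ary aggregation function on $L$ ($n\ge 1$) is a map $A:L^n\to L$ that is nondecreasing in the componentwise order ($\mathbf x\le\mathbf y$ implies $A(\mathbf x)\le A(\mathbf y)$) and satisfies $A(0,\dots,0)=0$, $A(1,\dots,1)=1$. $\mathsf{C}(L)$ is the set of all aggregation functions on $L$ (of all arities). An $n$-ary polynomial on $L$ is any function $L^n\to L$ obtained in finitely many steps from projections and constant functions by pointwise joins and meets; $\mathsf{Pol}_{0,1}(L)$ is the set of polynomials $p$ (of arity $\ge1$) with $p(0,\dots,0)=0$ and $p(1,\dots,1)=1$. For $a\in L$, $\chi_a:L\to L$ is defined by $\chi_a(x)=1$ if $x\ge a$ and $x\ne 0$, and $\chi_a(x)=0$ otherwise. An element $a$ is join-irreducible if $a\neq 0$ and $a=b\vee c$ implies $a=b$ or $a=c$. *)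

(* Defs.v *)
From HB Require Import structures.
From mathcomp Require Import all_boot all_order.
Set Implicit Arguments. Unset Strict Implicit. Unset Printing Implicit Defensive.
Import Order.Theory.
Local Open Scope order_scope.

Inductive pterm (T : Type) (n : nat) : Type :=
  | PVar of 'I_n
  | PConst of T
  | PJoin of pterm T n & pterm T n
  | PMeet of pterm T n & pterm T n.

Section Poly.
Context {d : Order.disp_t} (L : finTBLatticeType d).

Fixpoint peval (n : nat) (t : pterm L n) (x : 'I_n -> L) : L :=
  match t with
  | PVar i => x i
  | PConst c => c
  | PJoin t1 t2 => peval t1 x `|` peval t2 x
  | PMeet t1 t2 => peval t1 x `&` peval t2 x
  end.

Definition is_polynomial (n : nat) (f : ('I_n -> L) -> L) : Prop :=
  exists t : pterm L n, forall x, f x = peval t x.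

Definition is_aggregation (n : nat) (f : ('I_n -> L) -> L) : Prop :=
  [/\ (0 < n)%N,
      (forall x y : 'I_n -> L, (forall i, x i <= y i) -> f x <= f y),
      f (fun _ => \bot) = \bot &
      f (fun _ => \top) = \top].

Definition in_Pol01 (n : nat) (f : ('I_n -> L) -> L) : Prop :=
  [/\ (0 < n)%N, is_polynomial f, f (fun _ => \bot) = \bot &
      f (fun _ => \top) = \top].

Definition chi (a x : L) : L :=
  if (a <= x) && (x != \bot) then \top else \bot.

Definition join_irreducible (a : L) : Prop :=
  a != \bot /\ forall b c : L, a = b `|` c -> a = b \/ a = c.

Definition is_unary_polynomial (g : L -> L) : Prop :=
  is_polynomial (fun x : 'I_1 -> L => g (x ord0)).

End Poly.

(* Main.v *)
Require Import Defs.
From HB Require Import structures.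
From mathcomp Require Import all_boot all_order.
From Stdlib Require Import Classical.
Set Implicit Arguments. Unset Strict Implicit. Unset Printing Implicit Defensive.
Import Order.Theory.
Local Open Scope order_scope.

Section Proofs.
Context {d : Order.disp_t} (L : finTBLatticeType d).

Fixpoint psubst (n : nat) (i : 'I_n) (t : pterm L 1) : pterm L n :=
  match t with
  | PVar _ => PVar L i
  | PConst c => PConst n c
  | PJoin t1 t2 => PJoin (psubst i t1) (psubst i t2)
  | PMeet t1 t2 => PMeet (psubst i t1) (psubst i t2)
  end.

Lemma peval_subst n (i : 'I_n) t (x : 'I_n -> L) :
  peval (psubst i t) x = peval t (fun _ => x i).
Proof. by elim: t => //= t1 -> t2 ->. Qed.

Lemma poly_ext n (f g : ('I_n -> L) -> L) :
  (forall x, f x = g x) -> is_polynomial g -> is_polynomial f.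
Proof. by move=> E [t Ht]; exists t => x; rewrite E. Qed.

Lemma poly_const n (c : L) : is_polynomial (fun _ : 'I_n -> L => c).
Proof. by exists (PConst n c). Qed.

Lemma poly_join n (f g : ('I_n -> L) -> L) :
  is_polynomial f -> is_polynomial g -> is_polynomial (fun x => f x `|` g x).
Proof. by move=> [t1 H1] [t2 H2]; exists (PJoin t1 t2) => x /=; rewrite H1 H2. Qed.

Lemma poly_meet n (f g : ('I_n -> L) -> L) :
  is_polynomial f -> is_polynomial g -> is_polynomial (fun x => f x `&` g x).
Proof. by move=> [t1 H1] [t2 H2]; exists (PMeet t1 t2) => x /=; rewrite H1 H2. Qed.

Lemma poly_bigjoin n (I : Type) (s : seq I) (P : pred I)
  (F : I -> ('I_n -> L) -> L) :
  (forall i, is_polynomial (F i)) ->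
  is_polynomial (fun x => \join_(i <- s | P i) F i x).
Proof.
move=> HF; elim: s => [|i s IH].
  by apply: (poly_ext (g := fun _ => \bot)) => [x|]; rewrite ?big_nil //; apply: poly_const.
case: (boolP (P i)) => Pi.
  apply: (poly_ext (g := fun x => F i x `|` \join_(j <- s | P j) F j x)).
    by move=> x; rewrite big_cons Pi.
  exact: poly_join.
refine (poly_ext _ IH) => x; by rewrite big_cons (negbTE Pi).
Qed.

Lemma poly_bigmeet n (I : Type) (s : seq I) (P : pred I)
  (F : I -> ('I_n -> L) -> L) :
  (forall i, is_polynomial (F i)) ->
  is_polynomial (fun x => \meet_(i <- s | P i) F i x).
Proof.
move=> HF; elim: s => [|i s IH].
  by apply: (poly_ext (g := fun _ => \top)) => [x|]; rewrite ?big_nil //; apply: poly_const.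
case: (boolP (P i)) => Pi.
  apply: (poly_ext (g := fun x => F i x `&` \meet_(j <- s | P j) F j x)).
    by move=> x; rewrite big_cons Pi.
  exact: poly_meet.
refine (poly_ext _ IH) => x; by rewrite big_cons (negbTE Pi).
Qed.

Lemma poly_unary n (i : 'I_n) (g : L -> L) :
  is_unary_polynomial g -> is_polynomial (fun x : 'I_n -> L => g (x i)).
Proof.
move=> [t Ht]; exists (psubst i t) => x; rewrite peval_subst -Ht //.
Qed.

Lemma poly_mono n (t : pterm L n) (x y : 'I_n -> L) :
  (forall i, x i <= y i) -> peval t x <= peval t y.
Proof.
move=> Hxy; elim: t => //= t1 H1 t2 H2; [exact: leU2 | exact: leI2].
Qed.

Definition ind (c x : L) : L := if c <= x then \top else \bot.

Lemma card_lt (b c : L) : b < c ->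
  (#|[set y : L | (y < b)%O]| < #|[set y : L | (y < c)%O]|)%N.
Proof.
move=> bc; apply: proper_card; apply/properP; split.
  by apply/subsetP => y; rewrite !inE => yb; apply: lt_trans yb bc.
by exists b; rewrite !inE ?ltxx.
Qed.

Lemma ind_step (H : forall a : L, join_irreducible a -> is_unary_polynomial (chi a))
  (c : L) : (forall b, b < c -> is_unary_polynomial (ind b)) ->
  is_unary_polynomial (ind c).
Proof.
move=> IH.
case: (eqVneq c \bot) => [->|cn0].
  by exists (PConst 1 \top) => x; rewrite /ind le0x.
case: (classic (join_irreducible c)) => [JI|NJI].
  refine (poly_ext _ (H c JI)) => x; rewrite /ind /chi.
  case: (boolP (c <= x ord0)) => //= cx; case: eqP => // x0.
  by move: cx; rewrite x0 lex0 (negbTE cn0).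
have [b [e [Hc [cb ce]]]] : exists b e, c = b `|` e /\ c <> b /\ c <> e.
  apply: NNPP => Hne; apply: NJI; split => // b e Hbe.
  case: (classic (c = b)) => [?|nb]; [by left | right].
  apply: NNPP => ne; apply: Hne; by exists b, e.
have bc : b < c.
  rewrite lt_neqAle {2}Hc leUl andbT; apply/eqP => E; apply: cb; by rewrite E.
have ec : e < c.
  rewrite lt_neqAle {2}Hc leUr andbT; apply/eqP => E; apply: ce; by rewrite E.
apply: (poly_ext (g := fun x : 'I_1 -> L => ind b (x ord0) `&` ind e (x ord0))).
  move=> x; rewrite /ind Hc leUx.
  by case: (b <= x ord0); case: (e <= x ord0); rewrite ?meetxx ?meet0x ?meetx0.
exact: poly_meet (IH b bc) (IH e ec).
Qed.

Lemma ind_poly (H : forall a : L, join_irreducible a -> is_unary_polynomial (chi a))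
  (c : L) : is_unary_polynomial (ind c).
Proof.
suff: forall k (c : L), (#|[set y : L | (y < c)%O]| <= k)%N -> is_unary_polynomial (ind c).
  by move=> S; apply: (S _ c).
elim=> [|k IHk] {}c Hc; apply: ind_step => // b bc.
  by have := card_lt bc; rewrite leqn0 in Hc; rewrite (eqP Hc).
by apply: IHk; rewrite -ltnS; apply: leq_trans (card_lt bc) Hc.
Qed.

Lemma agg_poly (H : forall a : L, join_irreducible a -> is_unary_polynomial (chi a))
  n (f : ('I_n -> L) -> L) : is_aggregation f -> is_polynomial f.
Proof.
move=> [n0 mono f0 f1].
apply: (poly_ext (g := fun x => \join_(c : {ffun 'I_n -> L})
   (f c `&` \meet_(i < n) ind (c i) (x i)))).
  move=> x; apply/le_anti/andP; split.
    apply: (joins_min (j := [ffun i => x i])) => //.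
    rewrite lexI; apply/andP; split.
      by apply: mono => i; rewrite ffunE.
    by apply/meetsP => i _; rewrite /ind ffunE lexx.
  apply/joinsP => c _.
  case: (boolP [forall i, c i <= x i]) => [/forallP cx|/forallPn [i ci]].
    exact: le_trans (leIl _ _) (mono _ _ cx).
  apply: le_trans (leIr _ _) _; apply: (meets_max (j := i)) => //.
  by rewrite /ind (negbTE ci).
apply: poly_bigjoin => c; apply: poly_meet; first exact: poly_const.
apply: poly_bigmeet => i; exact: (poly_unary i (ind_poly H (c i))).
Qed.

Lemma chi_agg (a : L) : is_aggregation (fun x : 'I_1 -> L => chi a (x ord0)).
Proof.
split => //.
- move=> x y Hxy; rewrite /chi.
  case: (boolP ((a <= x ord0) && (x ord0 != \bot))) => [/andP [ax xn]|_]; last exact: le0x.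
  have -> : a <= y ord0 by apply: le_trans ax (Hxy ord0).
  have -> // : y ord0 != \bot.
  apply/eqP => y0; move: xn; have := Hxy ord0; rewrite y0 lex0 => ->; done.
- by rewrite /chi eqxx andbF.
- rewrite /chi lex1 /=; case: eqP => // ->; done.
Qed.

End Proofs.

Theorem mainTheorem2 (d : Order.disp_t) (L : finTBLatticeType d) :
  (forall (n : nat) (f : ('I_n -> L) -> L), is_aggregation f <-> in_Pol01 f)
  <->
  (forall a : L, join_irreducible a -> is_unary_polynomial (chi a)).
Proof.
split.
  move=> H a _; have [_ P _ _] := (H 1 _).1 (chi_agg a); exact: P.
move=> H n f; split.
  move=> A; have := agg_poly H A; case: A => n0 _ f0 f1 P; by split.
move=> [n0 [t Ht] f0 f1]; split => // x y Hxy.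
by rewrite !Ht; apply: poly_mono.
Qed.
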